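(* Let $a>0$ and let $f$ be a real-valued smooth function on an open interval containing $[-a,a]$. Suppose $f^{(n)}(t)\neq0$ for all integers $n\ge0$ and all $t\in[-a,a]$, and that there is a constant $M$ such that $\left|\frac{f^{(n+1)}(t)}{f^{(n)}(t)}\right|\le M$ for all $n\ge0$ and all $t\in[-a,a]$. Then the series $\hat f$ converges uniformly on $[-a,a]$ and $\hat f(t)=f(0)$ for all $t\in[-a,a]$.
   Context: For a smooth function $f$ on an interval containing the point $t$, $\hat f(t)$ denotes the series $\hat f(t):=\sum_{n=0}^{\infty}\frac{(-1)^n}{n!}\,t^n f^{(n)}(t)$; convergence of $\hat f$ refers to convergence of its partial sums, and $\hat f(t)$ also denotes the sum. *)

(* Defs.v *)
From Stdlib Require Import Reals Lra Arith Factorial.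
Open Scope R_scope.

(* This expresses "f is smooth on (b,c) with f^(n) = D n there". *)
Definition smooth_with_derivs (D : nat -> R -> R) (b c : R) : Prop :=
  forall (n : nat) (t : R), b < t < c -> derivable_pt_lim (D n) t (D (S n) t).

Definition fhat_partial (D : nat -> R -> R) (N : nat) (t : R) : R :=
  sum_f_R0 (fun k => (-1) ^ k / INR (fact k) * t ^ k * D k t) N.

Definition unif_cv_on (F : nat -> R -> R) (g : R -> R) (l u : R) : Prop :=
  forall eps : R, 0 < eps ->
    exists N : nat, forall (n : nat) (t : R), (N <= n)%nat -> l <= t <= u ->
      Rabs (F n t - g t) < eps.

(* Main.v *)
Require Import Defs.
From Stdlib Require Import Reals Lra Factorial.
Open Scope R_scope.

Lemma term_deriv (D : nat -> R -> R) b c (hs : smooth_with_derivs D b c) k t :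
  b < t < c ->
  derivable_pt_lim (fun t => (-1) ^ k / INR (fact k) * t ^ k * D k t) t
    ((-1) ^ k / INR (fact k) * (INR k * t ^ pred k * D k t + t ^ k * D (S k) t)).
Proof.
  intros ht.
  set (cc := (-1) ^ k / INR (fact k)).
  assert (H1 := derivable_pt_lim_scal (fun y => y ^ k) cc t _ (derivable_pt_lim_pow t k)).
  assert (H := derivable_pt_lim_mult _ (D k) t _ _ H1 (hs k t ht)).
  unfold mult_fct, mult_real_fct in H.
  replace (cc * (INR k * t ^ pred k * D k t + t ^ k * D (S k) t))
    with (cc * (INR k * t ^ pred k) * D k t + cc * t ^ k * D (S k) t) by ring.
  exact H.
Qed.

Lemma h_deriv (D : nat -> R -> R) b c (hs : smooth_with_derivs D b c) N t :
  b < t < c ->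
  derivable_pt_lim (fhat_partial D N) t ((-1) ^ N / INR (fact N) * t ^ N * D (S N) t).
Proof.
  intros ht. induction N as [|N IH].
  - unfold fhat_partial. simpl sum_f_R0.
    assert (H := term_deriv D b c hs 0 t ht).
    replace ((-1) ^ 0 / INR (fact 0) * t ^ 0 * D 1%nat t) with
      ((-1) ^ 0 / INR (fact 0) * (INR 0 * t ^ pred 0 * D 0%nat t + t ^ 0 * D 1%nat t)).
    + exact H.
    + simpl. field.
  - assert (H := derivable_pt_lim_plus _ _ t _ _ IH (term_deriv D b c hs (S N) t ht)).
    unfold plus_fct in H.
    replace ((-1) ^ S N / INR (fact (S N)) * t ^ S N * D (S (S N)) t) with
      ((-1) ^ N / INR (fact N) * t ^ N * D (S N) t +
       (-1) ^ S N / INR (fact (S N)) *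
       (INR (S N) * t ^ pred (S N) * D (S N) t + t ^ S N * D (S (S N)) t)).
    + exact H.
    + rewrite fact_simpl, mult_INR. simpl pred.
      assert (INR (fact N) <> 0) by apply INR_fact_neq_0.
      assert (INR (S N) <> 0) by (apply not_0_INR; discriminate).
      simpl pow. field. split; auto.
Qed.

Lemma h_zero (D : nat -> R -> R) N : fhat_partial D N 0 = D 0%nat 0.
Proof.
  induction N as [|N IH]; unfold fhat_partial in *; simpl sum_f_R0.
  - simpl. field.
  - rewrite IH. simpl pow. ring.
Qed.

Theorem theorem4 (a b c : R) (D : nat -> R -> R)
  (ha : 0 < a) (hb : b < - a) (hc : a < c)
  (hsmooth : smooth_with_derivs D b c)
  (hnz : forall (n : nat) (t : R), - a <= t <= a -> D n t <> 0)
  (hM : exists M : R, forall (n : nat) (t : R), - a <= t <= a ->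
          Rabs (D (S n) t / D n t) <= M) :
  exists g : R -> R,
    unif_cv_on (fhat_partial D) g (- a) a /\
    (forall t : R, - a <= t <= a -> g t = D 0%nat 0).
Proof.
  destruct hM as [M hM].
  assert (HM0 : 0 <= M).
  { apply Rle_trans with (2 := hM 0%nat 0 ltac:(lra)). apply Rabs_pos. }
  destruct (continuity_ab_maj (fun t => Rabs (D 0%nat t)) (-a) a ltac:(lra)) as [x0 [Hx0 _]].
  { intros t Ht.
    apply (continuity_pt_comp (D 0%nat) Rabs).
    - apply derivable_continuous_pt. exists (D 1%nat t). apply hsmooth. lra.
    - apply Rcontinuity_abs. }
  set (K := Rabs (D 0%nat x0)).
  assert (HK0 : 0 <= K) by apply Rabs_pos.
  assert (Hbound : forall n s, -a <= s <= a -> Rabs (D n s) <= K * M ^ n).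
  { induction n as [|n IH]; intros s Hs.
    - simpl. rewrite Rmult_1_r. apply (Hx0 s Hs).
    - replace (D (S n) s) with (D (S n) s / D n s * D n s)
        by (field; apply hnz; exact Hs).
      rewrite Rabs_mult. simpl pow.
      replace (K * (M * M ^ n)) with (M * (K * M ^ n)) by ring.
      apply Rmult_le_compat; try apply Rabs_pos; auto. }
  exists (fun _ => D 0%nat 0). split; [|reflexivity].
  assert (Hest : forall N t, -a <= t <= a ->
     Rabs (fhat_partial D N t - D 0%nat 0) <= K * a * M * ((a * M) ^ N / INR (fact N))).
  { intros N t Ht.
    set (h' := fun s => (-1) ^ N / INR (fact N) * s ^ N * D (S N) s).
    assert (Hxi : forall xi, -a <= xi <= a -> Rabs (h' xi) <= K * M * ((a * M) ^ N / INR (fact N))).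
    { intros xi Hxi. unfold h'.
      assert (Hf : 0 < INR (fact N)) by (apply lt_0_INR, lt_O_fact).
      unfold Rdiv. rewrite !Rabs_mult, Rabs_inv. rewrite pow_1_abs, (Rabs_right (INR (fact N))) by lra.
      rewrite <- RPow_abs.
      assert (Hp : Rabs xi ^ N <= a ^ N).
      { apply pow_incr. split; [apply Rabs_pos|]. apply Rabs_le. lra. }
      assert (Hb2 := Hbound (S N) xi Hxi). simpl pow in Hb2.
      rewrite Rpow_mult_distr.
      assert (0 <= a ^ N) by (apply pow_le; lra).
      assert (0 <= M ^ N) by (apply pow_le; lra).
      assert (0 <= Rabs xi ^ N) by (apply pow_le; apply Rabs_pos).
      assert (0 <= Rabs (D (S N) xi)) by apply Rabs_pos.
      unfold Rdiv. rewrite Rmult_1_l.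
      assert (0 < / INR (fact N)) by (apply Rinv_0_lt_compat; lra).
      replace (K * M * (a ^ N * M ^ N * / INR (fact N)))
        with (/ INR (fact N) * a ^ N * (K * (M * M ^ N))) by ring.
      apply Rmult_le_compat; try lra.
      - apply Rmult_le_pos; lra.
      - apply Rmult_le_compat_l; lra. }
    assert (HC : 0 <= K * M * ((a * M) ^ N / INR (fact N))).
    { apply Rmult_le_pos; [apply Rmult_le_pos; lra|].
      unfold Rdiv. apply Rmult_le_pos. apply pow_le. apply Rmult_le_pos; lra.
      left. apply Rinv_0_lt_compat, lt_0_INR, lt_O_fact. }
    rewrite <- (h_zero D N).
    destruct (Rtotal_order 0 t) as [Hlt|[Heq|Hgt]].
    - destruct (MVT_cor2 (fhat_partial D N) h' 0 t Hlt) as [xi [Hxi1 Hxi2]].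
      { intros s Hs. apply (h_deriv D b c hsmooth). lra. }
      rewrite Hxi1, Rabs_mult, (Rabs_right (t - 0)) by lra.
      replace (K * a * M * ((a * M) ^ N / INR (fact N)))
        with (K * M * ((a * M) ^ N / INR (fact N)) * a) by ring.
      apply Rmult_le_compat; try lra; [apply Rabs_pos|]. apply Hxi. lra.
    - subst t. rewrite Rminus_diag, Rabs_R0.
      replace (K * a * M * ((a * M) ^ N / INR (fact N)))
        with (K * M * ((a * M) ^ N / INR (fact N)) * a) by ring.
      apply Rmult_le_pos; lra.
    - destruct (MVT_cor2 (fhat_partial D N) h' t 0 Hgt) as [xi [Hxi1 Hxi2]].
      { intros s Hs. apply (h_deriv D b c hsmooth). lra. }
      rewrite <- Rabs_Ropp, Ropp_minus_distr, Hxi1, Rabs_mult, (Rabs_right (0 - t)) by lra.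
      replace (K * a * M * ((a * M) ^ N / INR (fact N)))
        with (K * M * ((a * M) ^ N / INR (fact N)) * a) by ring.
      apply Rmult_le_compat; try lra; [apply Rabs_pos|]. apply Hxi. lra. }
  intros eps Heps.
  set (C := K * a * M + 1).
  assert (HC : 0 < C) by (unfold C; assert (0 <= K * a * M) by (repeat apply Rmult_le_pos; lra); lra).
  destruct (cv_speed_pow_fact (a * M) (eps / C) ltac:(apply Rdiv_lt_0_compat; lra)) as [N HN].
  exists N. intros n t Hn Ht.
  apply Rle_lt_trans with (1 := Hest n t Ht).
  assert (H := HN n Hn). unfold R_dist in H. rewrite Rminus_0_r in H.
  assert (Hpos : 0 <= (a * M) ^ n / INR (fact n)).
  { unfold Rdiv. apply Rmult_le_pos. apply pow_le. apply Rmult_le_pos; lra.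
    left. apply Rinv_0_lt_compat, lt_0_INR, lt_O_fact. }
  rewrite Rabs_right in H by lra.
  apply Rle_lt_trans with (C * ((a * M) ^ n / INR (fact n))).
  - apply Rmult_le_compat_r; [lra|]. unfold C; lra.
  - apply Rmult_lt_compat_l with (r := C) in H; [|lra].
    replace (C * (eps / C)) with eps in H by (field; lra). exact H.
Qed.
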